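(* Let $(g(x))_{x\ge0}$ be a semigroup acting on a real finite-dimensional vector space $V$, with SRPD $V=\bigoplus_{i=1}^nV_i$. Let $I$ be the set of indices $i$ such that $V_i$ is of first type and its eigenvalue satisfies $\lambda(x)=0$ for all $x>0$. Then for every $x>0$, $\ker g(x)=\bigoplus_{i\in I}V_i$.
   Context: A semigroup is a map $g:[0,\infty)\to L(V)$ with $g(0)=\mathrm{id}$ and $g(x+y)=g(x)g(y)$ for all $x,y\ge0$. A simultaneous real primary decomposition (SRPD) is a decomposition $V=\bigoplus_{i=1}^nV_i$ into nonzero subspaces, each $g(x)$-invariant for all $x\ge0$, such that each $V_i$ is either of first type: for every $x\ge0$, $g(x)|_{V_i}$ has exactly one (complex) eigenvalue $\lambda(x)$, which is real and $\ge0$; or of second type: for every $x\ge 0$ the eigenvalues of $g(x)|_{V_i}$ lie in $\{\lambda(x),\overline{\lambda(x)}\}$ for some $\lambda(x)\in\mathbb C$, with $\lambda(x)\notin\mathbb R$ for some $x$. *)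

(* Defs.v *)
(* V = 'rV[R]_d (real row vectors, R : realType),
   linear maps = square matrices acting on the right: v |-> v *m A.
   Subspaces = matrices via their row spaces (mxalgebra, %MS). *)
From HB Require Import structures.
From mathcomp Require Import all_boot all_order all_algebra.
From mathcomp Require Import complex.
From mathcomp Require Import reals.
Set Implicit Arguments. Unset Strict Implicit. Unset Printing Implicit Defensive.
Import Order.TTheory GRing.Theory Num.Theory.
Local Open Scope ring_scope.

(* A semigroup g : [0,oo) -> L(V): only the values at x >= 0 matter. *)
Definition is_semigroup (R : realType) (d : nat) (g : R -> 'M[R]_d) : Prop :=
  g 0 = 1%:M /\
  forall x y : R, 0 <= x -> 0 <= y -> g (x + y) = g x *m g y.

(* Matrix of the restriction of A to an A-invariant subspace W, written in
   the basis row_base W of W. *)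
Definition restr (R : fieldType) (d : nat) (W : 'M[R]_d) (A : 'M[R]_d)
  : 'M[R]_(\rank W) :=
  row_base W *m A *m pinvmx (row_base W).

(* z is a (complex) eigenvalue of the real operator A restricted to W,
   i.e. an eigenvalue of the complexification of that restriction. *)
Definition ceig (R : rcfType) (d : nat) (W A : 'M[R]_d) (z : R[i]) : Prop :=
  eigenvalue (map_mx (real_complex R) (restr W A)) z.

Definition first_type (R : realType) (d : nat) (g : R -> 'M[R]_d)
  (W : 'M[R]_d) : Prop :=
  forall x : R, 0 <= x ->
    exists lam : R, 0 <= lam /\
      forall z : R[i], ceig W (g x) z <-> z = real_complex R lam.

Definition second_type (R : realType) (d : nat) (g : R -> 'M[R]_d)
  (W : 'M[R]_d) : Prop :=
  exists lam : R -> R[i],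
    (forall x : R, 0 <= x -> forall z : R[i], ceig W (g x) z ->
        z = lam x \/ z = conjc (lam x)) /\
    (exists x : R, 0 <= x /\ forall r : R, lam x <> real_complex R r).

Definition SRPD (R : realType) (d n : nat) (g : R -> 'M[R]_d)
  (Vs : 'I_n -> 'M[R]_d) : Prop :=
  mxdirect (\sum_(i < n) Vs i) /\
  (\sum_(i < n) Vs i == 1%:M)%MS /\
  (forall i, Vs i != 0) /\
  (forall i x, 0 <= x -> stablemx (Vs i) (g x)) /\
  (forall i, first_type g (Vs i) \/ second_type g (Vs i)).

Definition in_I (R : realType) (d : nat) (g : R -> 'M[R]_d)
  (W : 'M[R]_d) : Prop :=
  first_type g W /\
  forall x : R, 0 < x -> forall z : R[i], ceig W (g x) z <-> z = 0.

(* Main.v *)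
Require Import Defs.
From HB Require Import structures.
From mathcomp Require Import all_boot all_order all_algebra all_field.
From mathcomp Require Import complex reals ring.
Import Order.TTheory GRing.Theory Num.Theory.
Local Open Scope ring_scope.
Set Implicit Arguments. Unset Strict Implicit.

Lemma nil_of_eig0 (F : closedFieldType) r (A : 'M[F]_r.+1) :
  (forall z, eigenvalue A z -> z = 0) -> A ^+ r.+1 = 0.
Proof.
move=> H.
have [s Hs] := closed_field_poly_normal (char_poly A).
have mon := char_poly_monic A.
rewrite (monicP mon) scale1r in Hs.
have Hs0 : forall z, z \in s -> z = 0.
  move=> z zs; apply: H; rewrite eigenvalue_root_char Hs.
  by rewrite root_prod_XsubC.
have Hp : char_poly A = 'X^(size s).
  rewrite Hs; elim: s Hs0 {Hs} => [|z s IH] Hs0; first by rewrite big_nil expr0.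
  rewrite big_cons IH; last by move=> y ys; apply: Hs0; rewrite inE ys orbT.
  by rewrite (Hs0 z) ?mem_head // subr0 exprS.
have := size_char_poly A; rewrite Hp size_polyXn => -[Es].
have := Cayley_Hamilton A; rewrite Hp rmorphXn /= horner_mx_X Es //.
Qed.

Section Cx.
Variable R : rcfType.
Local Notation rc := (real_complex R).

Lemma map_mxXn r (M : 'M[R]_r) k : map_mx rc (M ^+ k) = (map_mx rc M) ^+ k.
Proof.
elim: k => [|k IH]; first by rewrite !expr0 map_mx1.
by rewrite !exprS -!mulmxE map_mxM IH.
Qed.

Lemma eig0_of_nonunit r (M : 'M[R]_r) : M \notin unitmx ->
  eigenvalue (map_mx rc M) 0.
Proof.
move=> nu; rewrite /eigenvalue /eigenspace.
have -> : (0 : R[i])%:M = 0 :> 'M_r by apply/matrixP => i j; rewrite !mxE mul0rn.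
by rewrite subr0 kermx_eq0 row_free_unit map_unitmx.
Qed.

Lemma nil_of_ceig r (M : 'M[R]_r.+1) :
  (forall z, eigenvalue (map_mx rc M) z -> z = 0) -> M ^+ r.+1 = 0.
Proof.
move=> H; have := nil_of_eig0 H; rewrite -map_mxXn => /eqP.
by rewrite map_mx_eq0 => /eqP.
Qed.

Lemma ceig0_of_nil r (M : 'M[R]_r) k z : M ^+ k = 0 ->
  eigenvalue (map_mx rc M) z -> z = 0.
Proof.
move=> Mk /eigenvalueP [v Hv v0].
have Hk : forall j, v *m (map_mx rc M) ^+ j = z ^+ j *: v.
  elim=> [|j IH]; first by rewrite !expr0 mulmx1 scale1r.
  by rewrite exprSr -mulmxE mulmxA IH -scalemxAl Hv scalerA -exprSr.
have := Hk k; rewrite -map_mxXn Mk map_mx0 mulmx0 => /esym /eqP.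
rewrite scaler_eq0 (negPf v0) orbF expf_eq0 => /andP [_ /eqP //].
Qed.
End Cx.

Section Gen.
Variables (R : realType) (r : nat) (Mf : R -> 'M[R]_r).
Local Notation rc := (real_complex R).
Hypothesis HM : forall x y, 0 <= x -> 0 <= y -> Mf (x + y) = Mf x *m Mf y.
Hypothesis HM0 : Mf 0 = 1%:M.
Hypothesis Hr : (0 < r)%N.

Lemma Mpow k y : 0 <= y -> Mf (k%:R * y) = Mf y ^+ k.
Proof.
move=> y0; elim: k => [|k IH]; first by rewrite mul0r expr0 HM0.
rewrite -nat1r mulrDl mul1r HM // ?mulr_ge0 ?ler0n // IH exprS mulmxE //.
Qed.

Lemma nil_spread x k y : 0 < x -> Mf x ^+ k = 0 -> 0 < y ->
  exists k', Mf y ^+ k' = 0.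
Proof.
move=> x0 Hk y0.
have hb := archi_boundP (divr_ge0 (ltW x0) (ltW y0)).
set m := Num.bound (x / y) in hb.
rewrite ltr_pdivrMr // in hb.
exists (k * m)%N.
have E : (k * m)%N%:R * y = k%:R * x + k%:R * (m%:R * y - x).
  by rewrite natrM; ring.
rewrite -Mpow ?(ltW y0) // E HM ?mulr_ge0 ?ler0n ?(ltW x0) ?subr_ge0 ?(ltW hb) //.
by rewrite Mpow ?(ltW x0) // Hk mul0mx.
Qed.

Lemma pow_unit (M : 'M[R]_r) k : M \in unitmx -> M ^+ k \in unitmx.
Proof.
move=> u; elim: k => [|k IH]; first by rewrite expr0 unitmx1.
by rewrite exprS -mulmxE unitmx_mul u IH.
Qed.

Lemma zero_nonunit : (0 : 'M[R]_r) \notin unitmx.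
Proof.
case: r Hr => // r' _; by rewrite unitmxE det0 unitr0.
Qed.

Lemma spread_eig x k : 0 < x -> Mf x ^+ k = 0 -> forall y, 0 < y ->
  forall z, eigenvalue (map_mx rc (Mf y)) z <-> z = 0.
Proof.
move=> x0 Hk y y0 z; have [k' Hk'] := nil_spread x0 Hk y0.
split; first by apply: ceig0_of_nil Hk'.
move=> ->; apply: eig0_of_nonunit; apply/negP => u.
by move: (pow_unit k' u); rewrite Hk' (negPf zero_nonunit).
Qed.

Lemma caseA : (forall x, 0 < x -> forall z, eigenvalue (map_mx rc (Mf x)) z -> z = 0) ->
  forall x, 0 < x -> Mf x = 0.
Proof.
move=> H x x0.
have r0 : 0 < (r%:R : R) by rewrite ltr0n.
have x'0 : 0 < x / r%:R by rewrite divr_gt0.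
have -> : x = r%:R * (x / r%:R) by rewrite mulrC divfK // gt_eqF.
rewrite Mpow ?(ltW x'0) //.
move: (Mf (x / r%:R)) (H _ x'0); case: r Hr => // r' _ M HM'.
exact: nil_of_ceig HM'.
Qed.

Lemma zero_nonunitF (F : fieldType) : (0 : 'M[F]_r) \notin unitmx.
Proof.
case: r Hr => // r' _; by rewrite unitmxE det0 unitr0.
Qed.

Lemma nil_of_ceig_r (M : 'M[R]_r) :
  (forall z, eigenvalue (map_mx rc M) z -> z = 0) -> M ^+ r = 0.
Proof.
move: M; case: r Hr => // r' _ M H; exact: nil_of_ceig H.
Qed.

Lemma caseC :
  ((forall x, 0 <= x -> exists lam : R, 0 <= lam /\
      forall z, eigenvalue (map_mx rc (Mf x)) z <-> z = rc lam) \/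
   (exists lam : R -> R[i],
    (forall x : R, 0 <= x -> forall z : R[i], eigenvalue (map_mx rc (Mf x)) z ->
        z = lam x \/ z = conjc (lam x)) /\
    (exists x : R, 0 <= x /\ forall r : R, lam x <> rc r))) ->
  ~ ((forall x, 0 <= x -> exists lam : R, 0 <= lam /\
      forall z, eigenvalue (map_mx rc (Mf x)) z <-> z = rc lam) /\
     forall x : R, 0 < x -> forall z : R[i], eigenvalue (map_mx rc (Mf x)) z <-> z = 0) ->
  forall x, 0 < x -> Mf x \in unitmx.
Proof.
move=> T nI x x0; apply/negPn/negP => nu.
have e0 := eig0_of_nonunit nu.
case: T => [FT|[lam [H1 [x1 [x10 Hx1]]]]].
  have [lam [_ Hl]] := FT x (ltW x0).
  have Hk : Mf x ^+ r = 0.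
    apply: nil_of_ceig_r => z ez.
    have E0 := (Hl 0).1 e0; have Ez := (Hl z).1 ez.
    by rewrite Ez -E0.
  have S := spread_eig x0 Hk.
  by apply: nI; split.
have lx0 : lam x = 0.
  case: (H1 x (ltW x0) 0 e0) => E; first by rewrite -E.
  by apply/eqP; rewrite -conjc_eq0 -E.
have Hk : Mf x ^+ r = 0.
  apply: nil_of_ceig_r => z ez.
  by case: (H1 x (ltW x0) z ez); rewrite lx0 // conjc0.
have S := spread_eig x0 Hk.
move: x10; rewrite le_eqVlt => /orP [/eqP E|x1p].
  rewrite -E in Hx1.
  have e1 : eigenvalue (map_mx rc (Mf 0)) 1.
    rewrite HM0 map_mx1 /eigenvalue /eigenspace subrr kermx_eq0 row_free_unit.
    exact: zero_nonunitF.
  case: (H1 0 (lexx 0) 1 e1) => E1; apply: (Hx1 1); rewrite rmorph1 //.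
  by rewrite -[lam 0]conjcK -E1 conjc1.
have e1 := (S x1 x1p 0).2 erefl.
case: (H1 x1 (ltW x1p) 0 e1) => E1; apply: (Hx1 0); rewrite rmorph0 //.
by apply/eqP; rewrite -conjc_eq0 -E1.
Qed.
End Gen.
Lemma direct_zero (F : fieldType) n d (B_ : 'I_n -> 'M[F]_d) (w : 'I_n -> 'rV[F]_d) :
  mxdirect (\sum_i B_ i) -> (forall i, (w i <= B_ i)%MS) ->
  \sum_i w i = 0 -> forall i, w i = 0.
Proof.
move=> /mxdirect_sumsP dx sw s0 i.
have := dx i isT => cap0.
have Ew : w i = - \sum_(j | j != i) w j.
  by move: s0; rewrite (bigD1 i) //= => /eqP; rewrite addr_eq0 => /eqP.
apply/eqP; rewrite -submx0 -cap0 sub_capmx sw /=.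
rewrite Ew eqmx_opp; apply: summx_sub => j ji.
by apply: (sumsmx_sup j) => //.
Qed.

Lemma direct_sub (F : fieldType) n d (B_ : 'I_n -> 'M[F]_d) (P : pred 'I_n) :
  mxdirect (\sum_i B_ i) -> mxdirect (\sum_(i | P i) B_ i).
Proof.
move=> /mxdirect_sumsP dx; apply/mxdirect_sumsP => i Pi.
apply/eqP; rewrite -submx0 -[X in (_ <= X)%MS](dx i isT) capmxS //.
apply/sumsmx_subP => j /andP [_ ji].
by apply: (sumsmx_sup j) => //.
Qed.
Section Restr.
Variables (F : fieldType) (d : nat) (W : 'M[F]_d).
Local Notation B := (row_base W).

Lemma restrP A : stablemx W A -> restr W A *m B = B *m A.
Proof.
move=> sA; rewrite /restr; apply: mulmxKpV.
by rewrite stablemx_row_base.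
Qed.

Lemma restrM A1 A2 : stablemx W A1 -> stablemx W A2 ->
  restr W (A1 *m A2) = restr W A1 *m restr W A2.
Proof.
move=> s1 s2; apply: (row_free_inj (row_base_free W)) => /=.
rewrite restrP ?stablemxM //. by rewrite -mulmxA (restrP s2) [RHS]mulmxA (restrP s1) mulmxA.
Qed.

Lemma restr1 : restr W 1%:M = 1%:M.
Proof.
apply: (row_free_inj (row_base_free W)) => /=.
by rewrite restrP ?mulmx1 ?mul1mx // submx_refl.
Qed.

Lemma restr0_kill A : stablemx W A -> restr W A = 0 -> (W <= kermx A)%MS.
Proof.
move=> sA H; rewrite -(eq_row_base W) sub_kermx -restrP // H mul0mx //.
Qed.

Lemma restr_unit_inj A : stablemx W A -> restr W A \in unitmx ->
  forall v : 'rV_d, (v <= W)%MS -> v *m A = 0 -> v = 0.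
Proof.
move=> sA uA v vW vA.
have vB : (v <= B)%MS by rewrite eq_row_base.
rewrite -(mulmxKpV vB) in vA *.
set u := v *m pinvmx B in vA *.
have : u *m restr W A = 0.
  apply: (row_free_inj (row_base_free W)) => /=.
  by rewrite -mulmxA restrP // mulmxA vA mul0mx.
move=> H; have -> : u = 0.
  by rewrite -[u]mulmx1 -(mulmxV uA) mulmxA H mul0mx.
by rewrite mul0mx.
Qed.
End Restr.

Unset Implicit Arguments.
Theorem mainTheorem5 (R : realType) (d n : nat) (g : R -> 'M[R]_d)
  (Vs : 'I_n -> 'M[R]_d) (I : pred 'I_n) :
  is_semigroup g -> SRPD g Vs ->
  (forall i, I i <-> in_I g (Vs i)) ->
  forall x : R, 0 < x ->
    (kermx (g x) == \sum_(i | I i) Vs i)%MS /\ mxdirect (\sum_(i | I i) Vs i).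
Proof.
move=> [Hg0 Hgm] [dx [full [nz [st types]]]] HI x x0.
have key : forall i, (I i -> (Vs i <= kermx (g x))%MS) /\
  (~~ I i -> forall v : 'rV_d, (v <= Vs i)%MS -> v *m g x = 0 -> v = 0).
  move=> i.
  pose Mf := fun y => restr (Vs i) (g y).
  have HM : forall y z, 0 <= y -> 0 <= z -> Mf (y + z) = Mf y *m Mf z.
    by move=> y z y0 z0; rewrite /Mf Hgm // restrM //; apply: st.
  have HM0 : Mf 0 = 1%:M by rewrite /Mf Hg0 restr1.
  have Hr : (0 < \rank (Vs i))%N by rewrite lt0n mxrank_eq0 nz.
  split.
    move=> /HI [_ H2]; apply: restr0_kill; first exact: st (ltW x0).
    apply: (caseA HM HM0 Hr) => // y y0 z ez; exact: ((H2 y y0 z).1 ez).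
  move=> nIi v vW vg.
  apply: (restr_unit_inj (st i x (ltW x0)) _ vW vg).
  apply: (caseC HM HM0 Hr) => //.
    exact: types i.
  by move=> H; move/negP: nIi; apply; apply/HI; exact: H.
split; last exact: direct_sub.
apply/andP; split; last first.
  by apply/sumsmx_subP => i Ii; exact: (key i).1 Ii.
apply/row_subP => j; set v := row j (kermx (g x)).
have vg : v *m g x = 0 by apply/sub_kermxP; rewrite row_sub.
have : (v <= \sum_(i < n) Vs i)%MS.
  by case/andP: full => _; apply: submx_trans (submx1 v).
case/sub_sumsmxP => u Hv.
have Z : forall i, u i *m Vs i *m g x = 0.
  apply: (direct_zero dx) => [i|].
    apply: submx_trans (st i x (ltW x0)); apply: submxMr; apply: submxMl.
  by rewrite -mulmx_suml -Hv vg.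
rewrite Hv (bigID I) /= [X in _ + X]big1 ?addr0; last first.
  move=> i nIi; apply: ((key i).2 _ _ (submxMl (u i) (Vs i)) (Z i)).
  exact: nIi.
apply: summx_sub => i Ii; exact: (sumsmx_sup i Ii (submxMl (u i) (Vs i))).
Qed.
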